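(* Let $G$ be a topological group and $A$ a topological $G$-module. Suppose that for every $p\ge 0$ the augmented column complex $0\to A_c^p(G,A)\xrightarrow{\epsilon}A_{lc}^{p,0}(G,A)\xrightarrow{d_v}A_{lc}^{p,1}(G,A)\xrightarrow{d_v}\cdots$ is exact. Then for every $p\ge 0$ the augmented sub column complex of equivariant cochains $0\to C_c^p(G,A)\xrightarrow{\epsilon}A_{lc}^{p,0}(G,A)^G\xrightarrow{d_v}A_{lc}^{p,1}(G,A)^G\xrightarrow{d_v}\cdots$ is exact as well.
   Context: A topological $G$-module is an abelian topological group $A$ with an action of $G$ by group automorphisms such that the action map $G\times A\to A$ is continuous. For an identity neighbourhood $U$ of $G$ put $\Gamma_U^0:=G$ and, for $q\ge 1$, $\Gamma_U^q:=\{(g_0,\dots,g_q)\in G^{q+1}\mid g_i^{-1}g_j\in U \text{ for all } i,j\}$. $A_c^p(G,A):=C(G^{p+1},A)$ is the group of continuous maps, and $C_c^p(G,A)$ is its subgroup of $G$-equivariant maps, where $G$ acts by $(g.f)(g_0,\dots,g_p)=g.f(g^{-1}g_0,\dots,g^{-1}g_p)$. $A_{lc}^{p,q}(G,A)$ is the group of maps $f\colon G^{p+1}\times G^{q+1}\to A$ whose restriction to $G^{p+1}\times\Gamma_U^q$ is continuous for some identity neighbourhood $U$; $d_v f(\vec x,y_0,\dots,y_{q+1})=(-1)^p\sum_{i=0}^{q+1}(-1)^i f(\vec x,y_0,\dots,\widehat{y_i},\dots,y_{q+1})$. $G$ acts on $A_{lc}^{p,q}(G,A)$ by $(g.f)(\vec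 x,\vec y)=g.f(g^{-1}\vec x,g^{-1}\vec y)$ and $A_{lc}^{p,q}(G,A)^G$ denotes the fixed points. The augmentation is $\epsilon(f)(\vec x,y_0)=f(\vec x)$. *)

(* Defs.v *)
From HB Require Import structures.
From mathcomp Require Import all_boot all_order all_algebra.
From mathcomp Require Import all_classical all_reals all_analysis.
Set Implicit Arguments.
Unset Strict Implicit.
Unset Printing Implicit Defensive.
Import Order.TTheory GRing.Theory Num.Theory.
Local Open Scope classical_set_scope.
Local Open Scope ring_scope.

Record topGroup (G : topologicalType) := TopGroup {
  tg_mul : G -> G -> G;
  tg_inv : G -> G;
  tg_one : G;
  tg_mulA : forall x y z, tg_mul x (tg_mul y z) = tg_mul (tg_mul x y) z;
  tg_mul1g : forall x, tg_mul tg_one x = x;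
  tg_mulg1 : forall x, tg_mul x tg_one = x;
  tg_mulVg : forall x, tg_mul (tg_inv x) x = tg_one;
  tg_mulgV : forall x, tg_mul x (tg_inv x) = tg_one;
  tg_mul_cont : continuous (fun xy : G * G => tg_mul xy.1 xy.2);
  tg_inv_cont : continuous tg_inv
}.

Definition is_topGmodule (G : topologicalType) (tg : topGroup G)
    (A : topologicalZmodType) (act : G -> A -> A) : Prop :=
  [/\ forall g, zmod_morphism (act g),
      forall a, act (tg_one tg) a = a,
      forall g h a, act (tg_mul tg g h) a = act g (act h a)
    & continuous (fun ga : G * A => act ga.1 ga.2)].

Unset Implicit Arguments.
Section Cochains.
Variables (G : topologicalType) (tg : topGroup G) (A : topologicalZmodType)
  (act : G -> A -> A).

Local Notation "x * y" := (tg_mul tg x y).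
Local Notation "x ^-1" := (tg_inv tg x).

Definition Gpow (n : nat) := {ptws 'I_n -> G}.

Definition ltrans (n : nat) (g : G) (x : Gpow n) : Gpow n :=
  fun i => g^-1 * x i.

Definition Gamma (U : set G) (q : nat) : set (Gpow q.+1) :=
  if q is 0 then setT
  else [set y | forall i j : 'I_q.+1, U ((y i)^-1 * y j)].

Definition Ac (p : nat) : set (Gpow p.+1 -> A) :=
  [set f | continuous f].

Definition Cc (p : nat) : set (Gpow p.+1 -> A) :=
  [set f | Ac p f /\ forall g x, act g (f (ltrans _ g x)) = f x].

Definition Alc (p q : nat) : set (Gpow p.+1 * Gpow q.+1 -> A) :=
  [set f | exists U : set G, nbhs (tg_one tg) U /\
      {within [set x : Gpow p.+1 * Gpow q.+1 | Gamma U q x.2], continuous f}].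

Definition AlcG (p q : nat) : set (Gpow p.+1 * Gpow q.+1 -> A) :=
  [set f | Alc p q f /\
     forall g x, act g (f (ltrans _ g x.1, ltrans _ g x.2)) = f x].

Definition eps (p : nat) (f : Gpow p.+1 -> A) : Gpow p.+1 * Gpow 1 -> A :=
  fun x => f x.1.

Definition dv (p q : nat) (f : Gpow p.+1 * Gpow q.+1 -> A) :
    Gpow p.+1 * Gpow q.+2 -> A :=
  fun x => (\sum_(i < q.+2)
              f (x.1, (fun j : 'I_q.+1 => x.2 (lift i j)) : Gpow q.+1)
                *~ ((-1) ^+ i)) *~ ((-1) ^+ p).

Definition aug_exact (p : nat) (C0 : set (Gpow p.+1 -> A))
    (C : forall q, set (Gpow p.+1 * Gpow q.+1 -> A)) : Prop :=
  [/\ forall f, C0 f -> eps p f = 0 -> f = 0,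
      [set h | C 0 h /\ dv p 0 h = 0] = eps p @` C0
    & forall q, [set h | C q.+1 h /\ dv p q.+1 h = 0]
                = dv p q @` C q].

End Cochains.

Arguments Gpow : clear implicits.
Arguments ltrans {G} tg {n} g x.
Arguments Gamma {G} tg U q.
Arguments Ac {G} A p.
Arguments Cc {G} tg {A} act p.
Arguments Alc {G} tg A p q.
Arguments AlcG {G} tg {A} act p q.
Arguments eps {G A} p f.
Arguments dv {G A} p q f.
Arguments aug_exact {G A} p C0 C.

(* Main.v *)
Require Import Defs.
From HB Require Import structures.
From mathcomp Require Import all_boot all_order all_algebra.
From mathcomp Require Import all_classical all_reals all_analysis.
Import Order.TTheory GRing.Theory Num.Theory.
Local Open Scope classical_set_scope.
Local Open Scope ring_scope.

Section Act.
Variables (G : topologicalType) (tg : topGroup G) (A : topologicalZmodType)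
  (act : G -> A -> A) (hact : forall g, zmod_morphism (act g)).

Definition actA (g : G) : A -> A := act g.
HB.instance Definition _ g := GRing.isZmodMorphism.Build A A (actA g) (hact g).

Lemma act_dv p q g (f : Gpow G p.+1 * Gpow G q.+1 -> A) x :
  act g (dv p q f x) = dv p q (fun z => act g (f z)) x.
Proof.
rewrite /dv -[act g]/(actA g) raddfMz raddf_sum; congr (_ *~ _).
by apply: eq_bigr => i _; rewrite raddfMz.
Qed.
End Act.

Section Grp.
Variables (G : topologicalType) (tg : topGroup G).
Local Notation "x * y" := (tg_mul tg x y).
Local Notation "x ^-1" := (tg_inv tg x).

Lemma mulKg g x : g^-1 * (g * x) = x.
Proof. by rewrite tg_mulA tg_mulVg tg_mul1g. Qed.
Lemma mulKVg g x : g * (g^-1 * x) = x.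
Proof. by rewrite tg_mulA tg_mulgV tg_mul1g. Qed.
Lemma invMg g h : (g * h)^-1 = h^-1 * g^-1.
Proof.
have E : (g * h) * (h^-1 * g^-1) = tg_one tg.
  by rewrite -tg_mulA mulKVg tg_mulgV.
by rewrite -[LHS](tg_mulg1 tg) -E mulKg.
Qed.
Lemma invgK g : (g^-1)^-1 = g.
Proof. by rewrite -[LHS](tg_mulg1 tg) -(tg_mulVg tg g) mulKg. Qed.
Lemma ltrans_key g x0 y : (g^-1 * x0)^-1 * (g^-1 * y) = x0^-1 * y.
Proof. by rewrite invMg invgK -tg_mulA mulKVg. Qed.
End Grp.

Lemma Gamma_ltrans (G : topologicalType) (tg : topGroup G) U n g (y : Gpow G n.+1) :
  Gamma tg U n y -> Gamma tg U n (ltrans tg g y).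
Proof.
rewrite /Gamma; case: n y => [//|n] y H i j; rewrite /ltrans ltrans_key; exact: H.
Qed.
Lemma gpow_cvg (G : topologicalType) n (T : Type) (F : set_system T) (FF : Filter F)
  (u : T -> Gpow G n) (y : Gpow G n) :
  (forall i, (fun t => u t i) @ F --> y i) -> u @ F --> y.
Proof.
move=> H; apply/cvg_sup => i; apply/cvg_image.
  by rewrite eqEsubset; split=> v // _; exists (cst v).
move=> W /= /H Wn; exists ((fun h : Gpow G n => h i) @^-1` W) => //.
by rewrite eqEsubset; split => [j [? + <-//]|j Wj]; exists (fun _ => j).
Qed.

Lemma gpow_proj_cont (G : topologicalType) n (i : 'I_n) :
  continuous (fun h : Gpow G n => h i).
Proof. exact: (@proj_continuous _ (fun _ => G) i). Qed.

Section Cont.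
Variables (G : topologicalType) (tg : topGroup G) (A : topologicalZmodType)
  (act : G -> A -> A) (hc : continuous (fun ga : G * A => act ga.1 ga.2)) (p q : nat).
Local Notation X := (Gpow G p.+1 * Gpow G q.+1)%type.

Definition Tm (x : X) : X := (ltrans tg (x.1 ord0) x.1, ltrans tg (x.1 ord0) x.2).

Lemma ltrans_cont n (a : X -> G) (b : X -> Gpow G n) :
  continuous a -> continuous b -> continuous (fun x => ltrans tg (a x) (b x)).
Proof.
move=> ca cb x; apply: gpow_cvg => i; rewrite /ltrans.
apply: (@continuous2_cvg _ _ _ _ (nbhs x) _ _ _ (tg_mul tg)).
- move=> ?; exact: (@tg_mul_cont _ tg (_, _)).
- exact: (continuous_comp (ca x) (@tg_inv_cont _ tg (a x))).
- exact: (continuous_comp (cb x) (@gpow_proj_cont G n i (b x))).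
Qed.

Lemma fst_cont : continuous (fun x : X => x.1).
Proof. by move=> x; exact: cvg_fst. Qed.
Lemma snd_cont : continuous (fun x : X => x.2).
Proof. by move=> x; exact: cvg_snd. Qed.
Lemma x0_cont : continuous (fun x : X => x.1 ord0).
Proof. by move=> x; exact: (continuous_comp (fst_cont x) (@gpow_proj_cont G p.+1 ord0 x.1)). Qed.

Lemma Tm_cont : continuous Tm.
Proof.
move=> x; have := cvg_pair (@ltrans_cont _ _ _ x0_cont fst_cont x) (@ltrans_cont _ _ _ x0_cont snd_cont x); exact.
Qed.

Lemma Tm_Gamma U x : Gamma tg U q x.2 -> Gamma tg U q (Tm x).2.
Proof.
exact: Gamma_ltrans.
Qed.

Lemma f'_cont (U : set G) (f : X -> A) :
  {within [set x : X | Gamma tg U q x.2], continuous f} ->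
  {within [set x : X | Gamma tg U q x.2], continuous
     (fun x => act (x.1 ord0) (f (Tm x)))}.
Proof.
set S := [set x : X | Gamma tg U q x.2] => cf.
apply/subspace_continuousP => x Sx.
move/subspace_continuousP: cf => cf.
have cT : Tm @ within S (nbhs x) --> within S (nbhs (Tm x)).
  move=> P HP.
  have HP' : nbhs (Tm x) (fun z => S z -> P z) by exact: HP.
  have := Tm_cont x _ HP'; rewrite nbhs_simpl /= => H1.
  rewrite /within /=; apply: filterS H1 => z Hz Sz; apply: Hz; exact: Tm_Gamma.
rewrite /from_subspace; apply: (@continuous2_cvg _ _ _ _ (within S (nbhs x)) _ (fun x : X => x.1 ord0) (fun x => f (Tm x)) act).
- exact: (hc (_, _)).
- apply: cvg_trans _ (x0_cont x); apply: cvg_app; exact: cvg_within.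
- have STx : S (Tm x) by rewrite /S /=; apply: Tm_Gamma; exact: Sx.
  apply: cvg_trans _ (cf _ STx); exact: (cvg_app f cT).
Qed.
End Cont.

Theorem mainTheorem2 (G : topologicalType) (tg : topGroup G)
    (A : topologicalZmodType) (act : G -> A -> A) :
  is_topGmodule tg act ->
  (forall p : nat, aug_exact p (Ac A p) (Alc tg A p)) ->
  forall p : nat, aug_exact p (Cc tg act p) (AlcG tg act p).
Proof.
move=> [hact h1 hmul hc] Hex p.
have [Hinj Heps Hdv] := Hex p.
split.
- move=> f [Af _] E; exact: Hinj f Af E.
- apply/seteqP; split.
  + move=> h [[hA hinv] hdv].
    have : [set h | Alc tg A p 0 h /\ dv p 0 h = 0] h by split.
    rewrite Heps => -[f Af Ef]; subst h.
    exists f => //; split => // g x.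
    exact: (hinv g (x, (fun _ => tg_one tg) : Gpow G 1)).
  + move=> _ [f [Af finv] <-].
    have : (eps p @` Ac A p) (eps p f) by exists f.
    rewrite -Heps => -[hA hdv]; split => //; split => // g x.
    exact: finv.
- move=> q; apply/seteqP; split.
  + move=> h [[hA hinv] hdv].
    have : [set h | Alc tg A p q.+1 h /\ dv p q.+1 h = 0] h by split.
    rewrite Hdv => -[f [U [hU cf]] E].
    exists (fun x => act (x.1 ord0) (f (@Tm _ tg _ _ x))).
    * split; first by exists U; split => //; exact: (@f'_cont _ tg _ _ hc p q U f cf).
      move=> g x /=.
      have -> : @Tm _ tg _ _ (ltrans tg g x.1, ltrans tg g x.2) = @Tm _ tg _ _ x.
        rewrite /Tm /ltrans /=; congr pair; apply: funext => i; exact: ltrans_key.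
      by rewrite -hmul mulKVg.
    * apply: funext => x.
      rewrite -(hinv (x.1 ord0) x) -E (@act_dv _ _ _ hact).
      by [].
  + move=> _ [f [fA finv] <-].
    have : (dv p q @` Alc tg A p q) (dv p q f) by exists f.
    rewrite -Hdv => -[hA hdv]; split => //; split => // g x.
    rewrite (@act_dv _ _ _ hact) /dv; congr (_ *~ _); apply: eq_bigr => i _.
    congr (_ *~ _); exact: (finv g (x.1, _)).
Qed.
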